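(* Let $n\ge2$ be even, and let $K=\langle A,B,T\rangle$ be a Kleinian group obtained as in case (a). Then the subgroup $$\Gamma=\langle A^{j}TA^{-j}: j=0,1,\dots,n-1\rangle$$ is a Schottky group of rank $n$ and has index $2n$ in $K$. It is not a normal subgroup of $K$.
   Context: Case (a): $A(z)=e^{2\pi i/n}z$ and $B(z)=1/z$ generate the dihedral group $D_n$ of order $2n$. $T$ is a loxodromic Möbius transformation with $TBT^{-1}=AB$. $K=\langle A,B,T\rangle$ is obtained as an HNN-extension of $D_n$ by $\langle T\rangle$ via the Klein–Maskit combination theorem. This means there exist closed discs $D_1,D_2\subset\widehat{\mathbb C}$ with boundary loops $\delta_1,\delta_2$ such that: - $h(D_1)\cap D_2=\emptyset$ for all $h\in D_n$; - $D_1$ is precisely invariant under $\langle B\rangle$ in $D_n$, i.e. $h(D_1)=D_1$ for $h\in\langle B\rangle$ and $h(D_1)\cap D_1=\emptyset$ for all other $h\in D_n$; - $D_2$ is precisely invariant under $\langle AB\rangle$ in $D_n$, defined in the same way; - $T(\delta_1)=\delta_2$ and $T$ maps the exterior of $D_1$ onto the interior of $D_2$. A Schottky group of rank $g$ is a Kleinian group generated by loxodromic transformations $A_1,\dots,A_g$ for which there exist $2g$ pairwise disjoint simple loops $\alpha_1,\alpha_1',\dots,\alpha_g,\alpha_g'$ with a common exterior domain $D$ such that $A_i(\alpha_i)=\alpha_i'$ and $A_i(D)\cap D=\emptyset$ for each $i$. *)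

(* Defs.v *)
From HB Require Import structures.
From mathcomp Require Import all_boot all_order all_algebra.
From mathcomp Require Import all_classical all_reals all_analysis.
From mathcomp Require Import complex.
Set Implicit Arguments. Unset Strict Implicit. Unset Printing Implicit Defensive.
Import Order.TTheory GRing.Theory Num.Theory.
Import numFieldNormedType.Exports.
Local Open Scope classical_set_scope.
Local Open Scope ring_scope.

Section Defs.
Variable R : realType.
Local Notation C := (R[i]).

(* The Riemann sphere: [Some z] is the finite point z, [None] is infinity. *)
Definition sphere := option C.

Definition mob (a b c d : C) (z : sphere) : sphere :=
  match z with
  | Some w => if c * w + d == 0 then None else Some ((a * w + b) / (c * w + d))
  | None => if c == 0 then None else Some (a / c)
  end.

Definition is_mobius (f : sphere -> sphere) : Prop :=
  exists a b c d : C, a * d - b * c != 0 /\ f = mob a b c d.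

Definition loxodromic (f : sphere -> sphere) : Prop :=
  exists a b c d : C, a * d - b * c = 1 /\ f = mob a b c d /\
    ~ (exists t : R, 0 <= t <= 4 /\ (a + d) ^+ 2 = Complex t 0).

Definition sqmod (z : C) : R := complex.Re z ^+ 2 + complex.Im z ^+ 2.

(* Discreteness in PSL(2,C): the identity is isolated. *)
Definition discrete_group (G : set (sphere -> sphere)) : Prop :=
  exists eps : R, 0 < eps /\
    forall g a b c d, G g -> a * d - b * c = 1 -> g = mob a b c d ->
      sqmod (a - 1) < eps -> sqmod b < eps -> sqmod c < eps ->
      sqmod (d - 1) < eps -> g = id.

Definition kleinian (G : set (sphere -> sphere)) : Prop :=
  (forall g, G g -> is_mobius g) /\ discrete_group G.

Definition group_closed (S : set (sphere -> sphere)) : Prop :=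
  S id /\ (forall f g, S f -> S g -> S (f \o g)) /\
  (forall f g, S f -> g \o f = id -> f \o g = id -> S g).

Definition gen (X : set (sphere -> sphere)) : set (sphere -> sphere) :=
  fun f => forall S, X `<=` S -> group_closed S -> S f.

Definition has_index (G H : set (sphere -> sphere)) (m : nat) : Prop :=
  exists r : 'I_m -> (sphere -> sphere), (forall i, G (r i)) /\
    forall k, G k -> exists! i : 'I_m, exists h, H h /\ k = r i \o h.

Definition normal_in (G H : set (sphere -> sphere)) : Prop :=
  forall k g, G k -> H g -> exists g', H g' /\ k \o g = g' \o k.

(* Topology of the sphere through the stereographic embedding into R^3. *)
Definition stereo (z : sphere) : R * R * R :=
  match z with
  | Some w => let s := sqmod w in
      (2 * complex.Re w / (1 + s), 2 * complex.Im w / (1 + s), (s - 1) / (s + 1))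
  | None => (0, 0, 1)
  end.

Definition cdisk : set (R * R) := [set p | p.1 ^+ 2 + p.2 ^+ 2 <= 1].
Definition odisk : set (R * R) := [set p | p.1 ^+ 2 + p.2 ^+ 2 < 1].
Definition circle : set (R * R) := [set p | p.1 ^+ 2 + p.2 ^+ 2 = 1].

(* h parametrises a closed topological disc in the sphere: a continuous
   injection of the closed unit disc (hence a homeomorphism onto its image). *)
Definition disc_param (h : R * R -> sphere) : Prop :=
  {within cdisk, continuous (stereo \o h)} /\ {in cdisk &, injective h}.

Definition disc_of (h : R * R -> sphere) := h @` cdisk.
Definition disc_interior (h : R * R -> sphere) := h @` odisk.
Definition disc_boundary (h : R * R -> sphere) := h @` circle.

Definition precisely_invariant (D : set sphere) (J G : set (sphere -> sphere)) :=
  (forall h, J h -> h @` D = D) /\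
  (forall h, G h -> ~ J h -> h @` D `&` D = set0).

(* Schottky group of rank g (loops realised as boundaries of pairwise disjoint
   closed discs; D the common exterior domain). *)
Definition schottky (G : set (sphere -> sphere)) (g : nat) : Prop :=
  kleinian G /\
  exists (Ag : 'I_g -> (sphere -> sphere)) (h h' : 'I_g -> (R * R -> sphere)),
    G = gen (fun f => exists i, f = Ag i) /\
    (forall i, loxodromic (Ag i)) /\
    (forall i, disc_param (h i) /\ disc_param (h' i)) /\
    (forall i j, i != j -> disc_of (h i) `&` disc_of (h j) = set0) /\
    (forall i j, i != j -> disc_of (h' i) `&` disc_of (h' j) = set0) /\
    (forall i j, disc_of (h i) `&` disc_of (h' j) = set0) /\
    let D := ~` (\bigcup_i (disc_of (h i) `|` disc_of (h' i))) in
    (forall i, Ag i @` disc_boundary (h i) = disc_boundary (h' i)) /\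
    (forall i, Ag i @` D `&` D = set0).

Definition rotm (theta : R) : sphere -> sphere :=
  mob (Complex (cos theta) (sin theta)) 0 0 1.

Definition invz : sphere -> sphere := mob 0 1 1 0.

End Defs.
Arguments invz {R}.

(* Main.v *)
From Pilot Require Import Defs.
From HB Require Import structures.
From mathcomp Require Import all_boot all_order all_algebra.
From mathcomp Require Import all_classical all_reals all_analysis.
From mathcomp Require Import complex.
From mathcomp Require Import ring lra zify.
Set Implicit Arguments. Unset Strict Implicit. Unset Printing Implicit Defensive.
Import Order.TTheory GRing.Theory Num.Theory.
Import numFieldNormedType.Exports.
Local Open Scope classical_set_scope.
Local Open Scope ring_scope.
Local Notation group_closed := Pilot.Defs.group_closed.
Arguments invz : simpl never.
Section Gen.
Variable Rr : realType.
Local Notation U := (sphere Rr).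
Lemma gen_group (X : set (U -> U)) : group_closed (gen X).
Proof.
split; first by move=> Y _ [].
split.
  move=> f g hf hg Y XY gY; have [_ [hc _]] := gY.
  by apply: hc; [apply: hf | apply: hg].
move=> f g hf gf fg Y XY gY; have [_ [_ hi]] := gY.
by apply: (hi f) => //; apply: hf.
Qed.
Lemma gen_sub (X Y : set (U -> U)) : X `<=` Y -> group_closed Y -> gen X `<=` Y.
Proof. by move=> XY gY f hf; apply: hf. Qed.
Lemma gen_in (X : set (U -> U)) : X `<=` gen X.
Proof. by move=> f Xf Y XY _; apply: XY. Qed.
End Gen.
Section Mob.
Variable R : realType.
Local Notation C := (R[i]).
Local Notation S := (sphere R).
Definition Rot (u : C) : S -> S := mob u 0 0 1.
Arguments Rot : simpl never.
Lemma Rot_Some u w : Rot u (Some w) = Some (u * w).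
Proof. by rewrite /Rot /= mul0r add0r oner_eq0 addr0 divr1. Qed.
Lemma Rot_None u : Rot u None = None.
Proof. by rewrite /Rot /= eqxx. Qed.
Lemma RotM u v : Rot u \o Rot v = Rot (u * v).
Proof. by apply: funext => -[w|] /=; rewrite ?Rot_Some ?Rot_None ?mulrA. Qed.
Lemma Rot1 : Rot 1 = id.
Proof. by apply: funext => -[w|] /=; rewrite ?Rot_Some ?Rot_None ?mul1r. Qed.
Lemma invzS w : invz (Some w) = if w == 0 then None else Some w^-1 :> S.
Proof. by rewrite /invz /= mul1r addr0 mul0r add0r div1r. Qed.
Lemma invzN : invz None = Some 0 :> S.
Proof. by rewrite /invz /= oner_eq0 mul0r. Qed.
Lemma invzK : invz \o invz = @id S.
Proof.
apply: funext => -[w|] /=; last by rewrite invzN invzS eqxx.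
rewrite invzS; case: eqP => [->|/eqP w0]; first by rewrite invzN.
by rewrite invzS invr_eq0 (negPf w0) invrK.
Qed.
Lemma invz_Rot u : u != 0 -> invz \o Rot u = Rot u^-1 \o invz.
Proof.
move=> u0; apply: funext => -[w|] /=; last by rewrite Rot_None invzN Rot_Some mulr0.
rewrite Rot_Some !invzS mulf_eq0 (negPf u0) /=.
case: eqP => w0; rewrite ?Rot_None // Rot_Some invrM ?unitfE //; first by rewrite mulrC. by apply/eqP.
Qed.
Lemma mob_inv (a b c d : C) : a*d - b*c != 0 -> mob a b c d \o mob d (-b) (-c) a = id.
Proof.
move=> det; apply: funext => -[w|] /=.
  case: eqP => [h|/eqP h] /=.
    case: eqP => [c0|/eqP c0].
      by move: det h; rewrite c0 oppr0 mul0r add0r mulr0 subr0 => /[swap] -> ; rewrite mul0r eqxx.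
    congr Some; have ->: a = c * w.
      apply/eqP; rewrite -subr_eq0; apply/eqP; rewrite -h; ring.
    by field.
  have e : c * ((d * w + - b) / (- c * w + a)) + d = (a * d - b * c) / (- c * w + a).
    by field.
  rewrite e mulf_eq0 invr_eq0 (negPf det) (negPf h) /=; congr Some.
  by field; rewrite h det.
case: eqP => [c0|/eqP c0] /=.
  by rewrite (_ : c = 0) ?eqxx // -(opprK c) c0 oppr0.
have c0' : c != 0 by rewrite -oppr_eq0.
have -> : c * (d / - c) + d = 0 by field.
by rewrite eqxx.
Qed.
Lemma Rot_mob (u v a b c d : C) : u * v = 1 -> Rot u \o mob a b c d \o Rot v = mob a (b*u) (c*v) d.
Proof.
move=> uv; have u0 : u != 0 by apply/eqP => u0; move: uv; rewrite u0 mul0r => /eqP; rewrite eq_sym oner_eq0.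
have -> : v = u^-1 by apply: (mulfI u0); rewrite uv divff.
apply: funext => -[w|] /=.
  rewrite Rot_Some /= mulrA.
  case: eqP => [h|/eqP h]; first by rewrite Rot_None.
  rewrite Rot_Some; congr Some.
  have e : c / u * w + d = (c * w + d * u) / u by field.
  rewrite e mulf_eq0 invr_eq0 (negPf u0) orbF in h.
  by field; rewrite u0 h.
rewrite Rot_None /= mulf_eq0 invr_eq0 (negPf u0) orbF.
case: eqP => [c0|/eqP c0]; first by rewrite Rot_None.
rewrite Rot_Some; congr Some.
by field; rewrite u0 c0.
Qed.
End Mob.
Arguments Rot : simpl never.
Section Grp.
Variable R : realType.
Local Notation C := (R[i]).
Local Notation S := (sphere R).
Variable m : nat.
Local Notation n := m.+2.
Variable w : C.
Hypothesis wn : w ^+ n = 1.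
Hypothesis winj : forall a b, (a < n)%N -> (b < n)%N -> w ^+ a = w ^+ b -> a = b.

Lemma w0 : w != 0.
Proof. by apply/eqP => h; move: wn; rewrite h expr0n /= => /eqP; rewrite eq_sym oner_eq0. Qed.

Lemma wmod q r : w ^+ (q * n + r) = w ^+ r.
Proof. by rewrite exprD mulnC exprM wn expr1n mul1r. Qed.

Lemma wmodn a : w ^+ a = w ^+ (a %% n)%N.
Proof. by rewrite {1}(divn_eq a n) wmod. Qed.

Definition Rw k : S -> S := Rot (w ^+ k).
Arguments Rw : simpl never.

Lemma RwD a b x : Rw a (Rw b x) = Rw (a + b) x.
Proof. by rewrite /Rw exprD -RotM. Qed.

Lemma Rw0 x : Rw 0 x = x.
Proof. by rewrite /Rw expr0 Rot1. Qed.

Lemma RwE a b x : w ^+ a = w ^+ b -> Rw a x = Rw b x.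
Proof. by rewrite /Rw => ->. Qed.

Lemma RwK1 k x : Rw k (Rw (m.+1 * k) x) = x.
Proof.
rewrite RwD -[x in _ = x]Rw0; apply: RwE.
by rewrite (_ : (k + m.+1 * k = k * n + 0)%N) ?wmod //; lia.
Qed.

Lemma RwK2 k x : Rw (m.+1 * k) (Rw k x) = x.
Proof. by rewrite RwD addnC -RwD RwK1. Qed.

Lemma RwKK k : w ^+ (m.+1 * (m.+1 * k)) = w ^+ k.
Proof. by rewrite (_ : (m.+1 * (m.+1 * k) = (m * k) * n + k)%N) ?wmod //; nia. Qed.

Lemma Rw_id k : Rw k = id -> w ^+ k = 1.
Proof.
move=> h; have := congr1 (fun f => f (Some 1)) h; rewrite /Rw Rot_Some mulr1 /=.
by case.
Qed.

Lemma winv k : (w ^+ k)^-1 = w ^+ (m.+1 * k).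
Proof.
have wk : w ^+ k != 0 by rewrite expf_eq0 (negPf w0) andbF.
apply: (mulfI wk); rewrite divff // -exprD.
by rewrite (_ : (k + m.+1 * k = k * n + 0)%N) ?wmod //; lia.
Qed.

Lemma invz_Rw k x : invz (Rw k x) = Rw (m.+1 * k) (invz x).
Proof.
have wk : w ^+ k != 0 by rewrite expf_eq0 (negPf w0) andbF.
by have := congr1 (fun f => f x) (invz_Rot wk); rewrite /= winv.
Qed.

Lemma Rw_None k x : Rw k x = None -> x = None.
Proof. by case: x => // a; rewrite /Rw Rot_Some. Qed.

Lemma Rw_Some0 k x : Rw k x = Some 0 -> x = Some 0.
Proof.
case: x => [a|]; last by rewrite /Rw Rot_None.
rewrite /Rw Rot_Some => -[] /eqP; rewrite mulf_eq0 expf_eq0 (negPf w0) andbF /=.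
by move/eqP => ->.
Qed.

Lemma Rw_fixN k : Rw k None = None.
Proof. by rewrite /Rw Rot_None. Qed.
Lemma Rw_fix0 k : Rw k (Some 0) = Some 0.
Proof. by rewrite /Rw Rot_Some mulr0. Qed.


Variables T Ti : S -> S.
Hypothesis TTi : forall x, T (Ti x) = x.
Hypothesis TiT : forall x, Ti (T x) = x.
Hypothesis TB : forall x, T (invz x) = Rw 1 (invz (T x)).

Definition ev (l : nat * bool) : S -> S :=
  Rw l.1 \o (if l.2 then T else Ti) \o Rw (m.+1 * l.1).
Arguments ev : simpl never.
Definition linv (l : nat * bool) := (l.1, ~~ l.2).

Lemma ev_linv l x : ev l (ev (linv l) x) = x.
Proof.
case: l => j b; rewrite /ev /linv /= RwK2.
by case: b => /=; rewrite ?TTi ?TiT RwK1.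
Qed.

Lemma linvK l : linv (linv l) = l.
Proof. by case: l => j b; rewrite /linv /= negbK. Qed.

Fixpoint evw (s : seq (nat * bool)) : S -> S :=
  if s is l :: s' then ev l \o evw s' else id.

Lemma evw_cat s1 s2 x : evw (s1 ++ s2) x = evw s1 (evw s2 x).
Proof. by elim: s1 => //= l s IH; rewrite IH. Qed.

Definition invw s := rev (map linv s).

Lemma evw_invw1 s x : evw s (evw (invw s) x) = x.
Proof.
elim: s x => //= l s IH x.
by rewrite /invw map_cons rev_cons -cats1 evw_cat -/(invw s) IH /= ev_linv.
Qed.

Lemma evw_invw2 s x : evw (invw s) (evw s x) = x.
Proof.
elim: s x => //= l s IH x.
rewrite /invw map_cons rev_cons -cats1 evw_cat -/(invw s) /=.
by have := ev_linv (linv l); rewrite linvK => ->; rewrite IH.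
Qed.

Definition nrm (l : nat * bool) := ((l.1 %% n)%N, l.2).

Lemma ev_nrm l x : ev (nrm l) x = ev l x.
Proof.
case: l => j b; rewrite /ev /nrm /=.
have e1 : w ^+ (j %% n)%N = w ^+ j by rewrite -wmodn.
have e2 : w ^+ (m.+1 * (j %% n))%N = w ^+ (m.+1 * j) by rewrite wmodn [RHS]wmodn modnMmr.
by rewrite /Rw e1 e2.
Qed.

Lemma evw_nrm s x : evw (map nrm s) x = evw s x.
Proof. by elim: s x => //= l s IH x; rewrite ev_nrm IH. Qed.

Fixpoint red (s : seq (nat * bool)) : seq (nat * bool) :=
  match s with
  | [::] => [::]
  | l :: s' => match red s' with
               | k :: r => if k == linv l then r else l :: k :: r
               | [::] => [:: l]
               end
  end.

Fixpoint reduced (s : seq (nat * bool)) : bool :=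
  match s with
  | l :: ((k :: _) as s') => (k != linv l) && reduced s'
  | _ => true
  end.

Lemma evw_red s x : evw (red s) x = evw s x.
Proof.
elim: s x => //= l s IH x; rewrite -IH.
case: (red s) => [|k r] //=.
case: eqP => [->|] //=.
by rewrite ev_linv.
Qed.

Lemma reduced_tail l s : reduced (l :: s) -> reduced s.
Proof. by case: s => // k s /= /andP[]. Qed.

Lemma reduced_red s : reduced (red s).
Proof.
elim: s => //= l s IH.
case E: (red s) IH => [|k r] //= IH.
case: eqP => [_|/eqP ne] /=; first exact: reduced_tail IH.
by rewrite ne IH.
Qed.

Lemma all_red (P : pred (nat * bool)) s : (forall l, P l -> P (linv l)) -> all P s -> all P (red s).
Proof.
move=> _; elim: s => //= l s IH /andP[Pl /IH].
case: (red s) => [|k r] /=; first by rewrite Pl.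
by case: eqP => _ /= /andP[Pk Pr]; rewrite /= ?Pl ?Pk ?Pr.
Qed.


Variables D1 D2 : set S.
Hypothesis PI1 : forall k, Rw k <> id -> Rw k @` D1 `&` D1 = set0.
Hypothesis PI2 : forall k, Rw k <> id -> Rw k @` D2 `&` D2 = set0.
Hypothesis Dis : forall k, Rw k @` D1 `&` D2 = set0.
Hypothesis Tmap : forall y, ~ D1 y -> D2 (T y).

Definition Disc (l : nat * bool) : set S := Rw l.1 @` (if l.2 then D2 else D1).

Lemma PI_gen (D : set S) (PI : forall k, Rw k <> id -> Rw k @` D `&` D = set0) a b y y' :
  (a < n)%N -> (b < n)%N -> D y -> D y' -> Rw a y = Rw b y' -> a = b.
Proof.
move=> an bn Dy Dy' e.
case: (eqVneq a b) => // ab; exfalso.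
have ey : y = Rw (m.+1 * a + b) y' by rewrite -RwD -e RwK2.
have nid : Rw (m.+1 * a + b) <> id.
  move=> /Rw_id h; move/eqP: ab; apply; apply: winj => //.
  rewrite -[w ^+ a]mulr1 -h -exprD addnA.
  by rewrite (_ : (a + m.+1 * a + b = a * n + b)%N) ?wmod //; lia.
have H : (Rw (m.+1 * a + b) @` D `&` D) y by split => //; exists y'.
by rewrite PI in H.
Qed.

Lemma mix a b y y' : D1 y -> D2 y' -> Rw a y = Rw b y' -> False.
Proof.
move=> Dy Dy' e.
have ey : y' = Rw (m.+1 * b + a) y by rewrite -RwD e RwK2.
have H : (Rw (m.+1 * b + a) @` D1 `&` D2) y' by split => //; exists y.
by rewrite Dis in H.
Qed.

Lemma ev_disc l x : ~ Disc (linv l) x -> Disc l (ev l x).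
Proof.
case: l => j b; rewrite /Disc /linv /ev /= => hx.
set y := Rw (m.+1 * j) x.
have hy : ~ (if ~~ b then D2 else D1) y.
  by move=> Dy; apply: hx; exists y => //; rewrite /y RwK1.
exists ((if b then T else Ti) y) => //.
clear hx; case: b hy => /= hy; first exact: Tmap.
case: (pselect (D1 (Ti y))) => // nD; exfalso; apply: hy.
by rewrite -(TTi y); exact: Tmap.
Qed.

Lemma disc_disj l l' x : (l.1 < n)%N -> (l'.1 < n)%N -> Disc l x -> Disc l' x -> l = l'.
Proof.
case: l l' => [j b] [j' b'] /= hj hj'; rewrite /Disc /= => -[y Dy <-] [y' Dy' e].
case: b b' Dy Dy' e => [] [] /= Dy Dy' e.
- by rewrite (PI_gen PI2 hj' hj Dy' Dy e).
- by exfalso; apply: (mix Dy' Dy e).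
- by exfalso; apply: (mix Dy Dy' (esym e)).
- by rewrite (PI_gen PI1 hj' hj Dy' Dy e).
Qed.

Lemma Rw1_ne_id : Rw 1 <> id.
Proof.
move=> /Rw_id h; have := winj (a:=1) (b:=0) isT isT; rewrite expr0 h => /(_ erefl).
done.
Qed.

Lemma fixpt_notin (D : set S) (PI : forall k, Rw k <> id -> Rw k @` D `&` D = set0) p :
  Rw 1 p = p -> ~ D p.
Proof.
move=> fp Dp; have H : (Rw 1 @` D `&` D) p by split => //; exists p.
by rewrite (PI 1 Rw1_ne_id) in H.
Qed.

Lemma disc_None l : ~ Disc l None.
Proof.
case: l => j b; rewrite /Disc /= => -[y Dy /Rw_None ey]; subst y.
by case: b Dy; [apply: (fixpt_notin PI2 (Rw_fixN 1)) | apply: (fixpt_notin PI1 (Rw_fixN 1))].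
Qed.

Lemma disc_0 l : ~ Disc l (Some 0).
Proof.
case: l => j b; rewrite /Disc /= => -[y Dy /Rw_Some0 ey]; subst y.
by case: b Dy; [apply: (fixpt_notin PI2 (Rw_fix0 1)) | apply: (fixpt_notin PI1 (Rw_fix0 1))].
Qed.

Lemma pingpong s : reduced s -> all (fun l => (l.1 < n)%N) s ->
  forall l s', s = l :: s' -> forall x, (forall l, (l.1 < n)%N -> ~ Disc l x) -> Disc l (evw s x).
Proof.
elim: s => // l0 s IH red0 all0 l s' [el _] x hx; subst l0; rewrite /=.
case E: s IH red0 all0 => [|k r] IH red0 all0 /=.
  by apply: ev_disc; apply: hx; case/andP: all0.
have := IH (reduced_tail red0) (proj2 (andP all0)) k r erefl x hx.
move=> /= Dk; apply: ev_disc => Dl.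
case/andP: all0 => l0n /andP[kn _].
have := @disc_disj k (linv l) _ kn l0n Dk Dl; move: red0 => /= /andP[/eqP ne _].
by [].
Qed.

Lemma key s : (evw s None = None \/ evw s None = Some 0) -> forall x, evw s x = x.
Proof.
move=> h x; set s' := red (map nrm s).
have E y : evw s y = evw s' y by rewrite /s' evw_red evw_nrm.
case E' : s' => [|l r]; first by rewrite E E'.
exfalso.
have all' : all (fun l => (l.1 < n)%N) s'.
  rewrite /s'; apply: all_red => //.
  by apply/allP => l' /mapP[l'' _ ->]; rewrite /nrm /= ltn_pmod.
have := pingpong (reduced_red _) all' E' (x:=None) (fun l _ => @disc_None l).
by rewrite -E; case: h => ->; [apply: disc_None | apply: disc_0].
Qed.


Lemma invzKx x : invz (invz x) = x :> S.
Proof. exact: (congr1 (fun f => f x) (@invzK R)). Qed.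

Definition Ed (d : S -> S) := exists k (b : bool), d = Rw k \o (if b then invz else id).

Lemma Ed_id : Ed id.
Proof. by exists 0%N, false; apply: funext => x /=; rewrite Rw0. Qed.

Lemma Ed_comp d1 d2 : Ed d1 -> Ed d2 -> Ed (d1 \o d2).
Proof.
move=> [a [b ->]] [c [e ->]].
case: b.
  exists (a + m.+1 * c)%N, (~~ e); apply: funext => x /=.
  by case: e => /=; rewrite invz_Rw RwD // invzKx.
by exists (a + c)%N, e; apply: funext => x /=; rewrite RwD.
Qed.

Lemma Ed_inv d : Ed d -> exists d', Ed d' /\ (forall x, d' (d x) = x) /\ (forall x, d (d' x) = x).
Proof.
move=> [k [[] ->]].
  exists (Rw k \o invz); split; first by exists k, true.
  by split => x /=; rewrite invz_Rw invzKx RwK1.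
exists (Rw (m.+1 * k) \o id); split; first by exists (m.+1 * k)%N, false.
by split => x /=; rewrite ?RwK1 ?RwK2.
Qed.

Lemma Ed_None d : Ed d -> d None = None \/ d None = Some 0.
Proof. by move=> [k [[] ->]] /=; [right; rewrite invzN Rw_fix0 | left; rewrite Rw_fixN]. Qed.

Lemma X_Rw (X : S -> S) k x : Rw k (Rw (m.+1 * k) (X (Rw (m.+1 * (m.+1 * k)) x))) = X (Rw k x).
Proof. by rewrite RwK1 (RwE _ (RwKK k)). Qed.

Lemma TiB y : Ti (invz y) = invz (Ti (Rw 1 y)).
Proof.
have h : T (invz (Ti (Rw 1 y))) = invz y.
  by rewrite TB TTi invz_Rw RwK1.
by rewrite -h TiT.
Qed.

Lemma evE j b x : ev (j, b) x = Rw j ((if b then T else Ti) (Rw (m.+1 * j) x)).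
Proof. by []. Qed.

Lemma TE b d : Ed d -> exists d' l, Ed d' /\ forall x, (if b then T else Ti) (d x) = d' (ev l x).
Proof.
move=> [k [[] ->]]; last first.
  exists (Rw k \o id), (m.+1 * k, b)%N; split; first by exists k, false.
  by move=> x /=; rewrite evE X_Rw.
have e1 x : Rw k (invz x) = invz (Rw (m.+1 * k) x).
  by rewrite invz_Rw (RwE _ (RwKK k)).
case: b.
  exists (Rw (1 + m.+1 * (m.+1 * k)) \o invz), (m.+1 * (m.+1 * k), true)%N.
  split; first by exists (1 + m.+1 * (m.+1 * k))%N, true.
  move=> x /=; rewrite e1 TB evE.
  by rewrite -[T (Rw _ x)](X_Rw T (m.+1 * k)) invz_Rw RwD.
set j := (1 + m.+1 * k)%N.
exists (Rw (m.+1 * j) \o invz), (m.+1 * j, false)%N.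
split; first by exists (m.+1 * j)%N, true.
move=> x /=; rewrite e1 TiB RwD evE.
by rewrite -[Ti (Rw _ x)](X_Rw Ti j) invz_Rw.
Qed.

Definition Pp (k : S -> S) := forall d s, Ed d ->
  exists d' s', Ed d' /\ forall x, k (d (evw s x)) = d' (evw s' x).
Definition Qq (k : S -> S) := Pp k /\
  exists k', Pp k' /\ (forall x, k' (k x) = x) /\ (forall x, k (k' x) = x).

Lemma Pp_ext f g : (forall x, f x = g x) -> Pp f -> Pp g.
Proof.
move=> fg hf d s Ed0; have [d' [s' [Ed' h]]] := hf d s Ed0.
by exists d', s'; split => // x; rewrite -fg.
Qed.

Lemma Pp_id : Pp id.
Proof. by move=> d s Ed0; exists d, s. Qed.

Lemma Pp_comp f g : Pp f -> Pp g -> Pp (f \o g).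
Proof.
move=> hf hg d s Ed0; have [d1 [s1 [Ed1 h1]]] := hg d s Ed0.
have [d2 [s2 [Ed2 h2]]] := hf d1 s1 Ed1.
by exists d2, s2; split => // x /=; rewrite h1 h2.
Qed.

Lemma Qq_group : group_closed Qq.
Proof.
split; first by split; [exact: Pp_id | exists id; split; [exact: Pp_id | done]].
split.
  move=> f g [Pf [f' [Pf' [f1 f2]]]] [Pg [g' [Pg' [g1 g2]]]].
  split; first exact: Pp_comp.
  exists (g' \o f'); split; first exact: Pp_comp.
  by split => x /=; rewrite ?f1 ?g1 ?g2 ?f2.
move=> f g [Pf [f' [Pf' [f1 f2]]]] gf fg.
have gx x : f' x = g x.
  by rewrite -[in RHS](f2 x); have := congr1 (fun h => h (f' x)) gf.
split; first exact: Pp_ext Pf'.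
exists f; split => //; split => x.
  by have := congr1 (fun h => h x) fg.
by have := congr1 (fun h => h x) gf.
Qed.

Lemma Pp_Ed d0 : Ed d0 -> Pp d0.
Proof. by move=> E0 d s Ed0; exists (d0 \o d), s; split => //; exact: Ed_comp. Qed.

Lemma Qq_Ed d0 : Ed d0 -> Qq d0.
Proof.
move=> E0; split; first exact: Pp_Ed.
have [d' [E' [h1 h2]]] := Ed_inv E0.
by exists d'; split => //; exact: Pp_Ed.
Qed.

Lemma Pp_X b : Pp (if b then T else Ti).
Proof.
move=> d s Ed0; have [d' [l [E' h]]] := TE b Ed0.
by exists d', (l :: s); split => // x; rewrite h.
Qed.

Lemma Qq_T : Qq T.
Proof.
split; first exact: (Pp_X true).
by exists Ti; split; [exact: (Pp_X false) | split].
Qed.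

Lemma Qq_decomp k : Qq k -> exists d s, Ed d /\ forall x, k x = d (evw s x).
Proof.
move=> [Pk _]; have [d' [s' [E' h]]] := Pk id [::] Ed_id.
by exists d', s'; split => // x; rewrite -h.
Qed.

Lemma Ed_in (K : set (S -> S)) : group_closed K -> K (Rw 1) -> K invz -> forall d, Ed d -> K d.
Proof.
move=> [K1 [Kc _]] KA KB d [k [b ->]].
have KR j : K (Rw j).
  elim: j => [|j IH].
    by rewrite (_ : Rw 0 = id) //; apply: funext => x; rewrite Rw0.
  rewrite (_ : Rw j.+1 = Rw 1 \o Rw j); first exact: Kc.
  by apply: funext => x /=; rewrite RwD add1n.
by case: b; [apply: Kc | rewrite (_ : Rw k \o id = Rw k)].
Qed.

Definition Gam := gen (fun f => exists j : 'I_n, f = ev ((j : nat), true)).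

Lemma ev_Gam l : Gam (ev l).
Proof.
have G1 j : Gam (ev (j, true)).
  have -> : ev (j, true) = ev (nrm (j, true)) by apply: funext => x; rewrite ev_nrm.
  by apply: gen_in; exists (Ordinal (ltn_pmod j (isT : (0 < n)%N))).
case: l => j []; first exact: G1.
have [_ [_ hi]] := gen_group (fun f => exists j : 'I_n, f = ev ((j : nat), true)).
apply: (hi (ev (j, true))); first exact: G1.
  by apply: funext => x /=; have := ev_linv (j, false) x.
by apply: funext => x /=; have := ev_linv (j, true) x.
Qed.

Lemma evw_Gam s : Gam (evw s).
Proof.
have [G1 [Gc _]] := gen_group (fun f => exists j : 'I_n, f = ev ((j : nat), true)).
by elim: s => //= l s IH; apply: Gc => //; exact: ev_Gam.
Qed.

Lemma Gam_evw f : Gam f -> exists s, f = evw s.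
Proof.
move=> Gf; apply: (@gen_sub _ _ (fun f => exists s, f = evw s) _ _ f Gf).
  by move=> g [j ->]; exists [:: ((j : nat), true)]; apply: funext.
split; first by exists [::].
split; first by move=> f1 f2 [s1 ->] [s2 ->]; exists (s1 ++ s2); apply: funext => x; rewrite evw_cat.
move=> f1 g [s ->] gf fg; exists (invw s); apply: funext => x.
by rewrite -[in LHS](evw_invw1 s x); have := congr1 (fun h => h (evw (invw s) x)) gf.
Qed.


Definition rr (i : 'I_(2 * n)) : S -> S :=
  if ((i : nat) < n)%N then Rw ((i : nat)) \o id else Rw ((i : nat) - n) \o invz.

Lemma rr_Ed i : Ed (rr i).
Proof. by rewrite /rr; case: ifP => _; [exists ((i : nat)), false | exists ((i : nat) - n)%N, true]. Qed.

Lemma Rw_Some1 k : Rw k (Some 1) = Some (w ^+ k).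
Proof. by rewrite /Rw Rot_Some mulr1. Qed.

Lemma rr_inj i i' : (forall x, rr i x = rr i' x) -> i = i'.
Proof.
move=> h; apply: val_inj => /=; move: (h None) (h (Some 1)); rewrite /rr.
case: ifP => ilt; case: ifP => i'lt /=; rewrite ?invzN ?Rw_fixN ?Rw_fix0 ?invzS ?oner_eq0 ?invr1 ?Rw_Some1 //.
- by move=> _ [/winj]; apply.
move=> _ [e].
have h1 : ((i : nat) - n < n)%N by have := ltn_ord i; move/negbT: ilt; rewrite -leqNgt; lia.
have h2 : ((i' : nat) - n < n)%N by have := ltn_ord i'; move/negbT: i'lt; rewrite -leqNgt; lia.
have := winj h1 h2 e; move/negbT: ilt; move/negbT: i'lt; rewrite -!leqNgt; lia.
Qed.


Lemma coset_uniq i i' s s' : (forall x, rr i (evw s x) = rr i' (evw s' x)) -> i = i'.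
Proof.
move=> e; apply: rr_inj => y.
have [d' [Ed' [h1 h2]]] := Ed_inv (rr_Ed i').
have E1 x : evw (s' ++ invw s) x = d' (rr i x).
  by rewrite evw_cat -[in RHS](evw_invw1 s x) e h1.
have Ed2 : Ed (d' \o rr i) by apply: Ed_comp => //; exact: rr_Ed.
have K1 x : evw (s' ++ invw s) x = x.
  by apply: key; rewrite E1; exact: (Ed_None Ed2).
by rewrite -[LHS]h2 -E1 K1.
Qed.

Lemma index_main (K : set (S -> S)) : K `<=` Qq -> (forall d, Ed d -> K d) ->
  has_index K Gam (2 * n).
Proof.
move=> KQ KE; exists rr; split; first by move=> i; apply: KE; apply: rr_Ed.
move=> k Kk; have [d [s [[a [b ->]] hk]]] := Qq_decomp (KQ _ Kk).
have ib : ((if b then n + a %% n else a %% n) < 2 * n)%N.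
  by have := ltn_pmod a (isT : (0 < n)%N); case: (b); lia.
have ek : k = rr (Ordinal ib) \o evw s.
  apply: funext => x; rewrite hk /rr /=; clear hk.
  have am : (a %% n < n)%N := ltn_pmod a (isT : (0 < n)%N).
  case: b ib => ib /=.
    by rewrite ltnNge leq_addr /= addKn; apply: RwE; exact: wmodn.
  by rewrite am; apply: RwE; exact: wmodn.
exists (Ordinal ib); split; first by exists (evw s); split => //; exact: evw_Gam.
move=> i' [h' [Gh' e']]; have [s' eh] := Gam_evw Gh'; subst h'.
apply: (coset_uniq (s := s) (s' := s')) => x.
by have := congr1 (fun f => f x) ek; rewrite e' /= => <-.
Qed.

Lemma not_normal (K : set (S -> S)) : K invz -> ~ normal_in K Gam.
Proof.
move=> KB hn.
have GT : Gam T.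
  have -> : T = ev (0, true)%N by apply: funext => x; rewrite evE muln0 !Rw0.
  exact: ev_Gam.
have [g' [Gg' e]] := hn invz T KB GT.
have [s eg] := Gam_evw Gg'; subst g'.
have h y : evw s y = Rw (m.+1 * 1) (T y).
  have := congr1 (fun f => f (invz y)) e; rewrite /= invzKx => <-.
  by rewrite TB invz_Rw invzKx.
have h2 x : evw (s ++ [:: (0, false)%N]) x = Rw (m.+1 * 1) x.
  by rewrite evw_cat /= evE muln0 !Rw0 h TTi.
have := key (s := s ++ [:: (0, false)%N]); rewrite h2 Rw_fixN => /(_ (or_introl erefl) (Some 1)).
rewrite h2 Rw_Some1 => -[] /eqP; rewrite -(expr0 w) => /eqP /winj.
by rewrite muln1 => /(_ (ltnSn _) isT).
Qed.

End Grp.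

Section T.
Variable R : realType.
Local Notation C := (R[i]).
Lemma cmulE (a b c d : R) : (Complex a b : C) * (Complex c d) = Complex (a*c - b*d) (a*d + b*c).
Proof. by []. Qed.
Lemma conep : (1 : C) = Complex 1 0.
Proof. by []. Qed.
Definition ex (x : R) : C := Complex (cos x) (sin x).
Lemma exD x y : ex x * ex y = ex (x + y).
Proof. rewrite /ex cmulE cosD sinD; congr Complex; lra. Qed.
Lemma ex0 : ex 0 = 1. Proof. by rewrite /ex cos0 sin0. Qed.
Lemma ex_pow x k : ex x ^+ k = ex (k%:R * x).
Proof.
elim: k => [|k IH]; first by rewrite expr0 mul0r ex0.
by rewrite exprS IH exD -{1}(mul1r x) -mulrDl -natr1 addrC.
Qed.
Lemma ex_eq1 x : 0 < x < pi *+ 2 -> ex x != 1.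
Proof.
move=> /andP[x0 x2]; rewrite conep /ex; apply/eqP => -[c1 s0].
have [xl|xg] := ltP x pi.
  have := sin_gt0_pi (x:=x); rewrite x0 xl s0 => /(_ isT); by rewrite ltxx.
have h: sin (x - pi) = - sin x.
  by rewrite sinB cospi sinpi; lra.
suff : 0 < x - pi < pi by move/sin_gt0_pi; rewrite h s0 oppr0 ltxx.
have pi0 := pi_gt0 R.
have xp : x != pi by apply/eqP => hp; move: c1; rewrite hp cospi; lra.
rewrite mulr2n in x2; apply/andP; split; last by lra.
by rewrite subr_gt0 lt_neqAle eq_sym xp xg.
Qed.
End T.
Section S.
Variable R : realType.
Lemma cpair (T U V : topologicalType) (f : T -> U) (g : T -> V) : continuous f -> continuous g -> continuous (fun q => (f q, g q)).
Proof. move=> hf hg q; exact: (cvg_pair (hf q) (hg q)). Qed.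
Definition L3 (c s : R) (p : R * R * R) : R * R * R :=
  ((c * p.1.1 - s * p.1.2, s * p.1.1 + c * p.1.2), p.2).
Lemma c11 : continuous (fun p : R * R * R => p.1.1).
Proof. move=> p; apply: (@cvg_comp _ _ _ fst fst); [exact: cvg_fst | exact: cvg_fst]. Qed.
Lemma c12 : continuous (fun p : R * R * R => p.1.2).
Proof. move=> p; apply: (@cvg_comp _ _ _ fst snd); [exact: cvg_fst | exact: cvg_snd]. Qed.
Lemma c2 : continuous (fun p : R * R * R => p.2).
Proof. move=> p; exact: cvg_snd. Qed.
Lemma L3_cont c s : continuous (L3 c s).
Proof.
apply: cpair; last exact: c2.
apply: cpair => q.
  apply: cvgB; apply: cvgM; try exact: cvg_cst; [exact: c11 | exact: c12].
apply: cvgD; apply: cvgM; try exact: cvg_cst; [exact: c11 | exact: c12].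
Qed.
Lemma within_L (A : set (R*R)) (f : R * R -> R*R*R) c s : {within A, continuous f} -> {within A, continuous (L3 c s \o f)}.
Proof. move=> hf x; apply: (continuous_comp (hf x)); exact: L3_cont. Qed.
End S.
Section St.
Variable R : realType.
Local Notation C := (R[i]).
Lemma stereo_Rot (u : C) z : sqmod u = 1 ->
  stereo (Rot u z) = L3 (complex.Re u) (complex.Im u) (stereo z).
Proof.
case: u => a b; rewrite /sqmod /= => hu.
case: z => [[c d]|]; last by rewrite Rot_None /L3 /= !mulr0 subr0 addr0.
rewrite Rot_Some cmulE /stereo /sqmod /=.
have -> : (a * c - b * d) ^+ 2 + (a * d + b * c) ^+ 2 = c ^+ 2 + d ^+ 2.
  transitivity ((a ^+ 2 + b ^+ 2) * (c ^+ 2 + d ^+ 2)); first by ring.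
  by rewrite hu mul1r.
rewrite /L3 /=; congr (_, _, _); ring.
Qed.
End St.
Section Glue.
Variable R : realType.
Local Notation C := (R[i]).
Local Notation S := (sphere R).

Lemma iter_Rot (u : C) j : iter j (Rot u) = Rot (u ^+ j).
Proof.
apply: funext => x; elim: j => [|j IH] /=; first by rewrite expr0 Rot1.
by rewrite IH -[X in X = _]/((Rot u \o Rot (u ^+ j)) x) RotM exprS.
Qed.

Lemma Rot_inj (u : C) : u != 0 -> injective (Rot u).
Proof.
move=> u0 x y e; have := congr1 (Rot u^-1) e.
by rewrite -![Rot u^-1 (Rot u _)]/((Rot u^-1 \o Rot u) _) RotM mulVf // Rot1.
Qed.

Lemma sqmod_ex x : sqmod (ex x) = 1 :> R.
Proof. by rewrite /sqmod /ex /= cos2Dsin2. Qed.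

Lemma sqmod0 : sqmod (0 : C) = 0.
Proof. by rewrite /sqmod /= expr0n /= addr0. Qed.

Lemma disc_param_Rot (u : C) h : sqmod u = 1 -> disc_param h -> disc_param (Rot u \o h).
Proof.
move=> hu [hc hi]; split.
  have -> : @stereo R \o (Rot u \o h) = L3 (complex.Re u) (complex.Im u) \o (@stereo R \o h).
    by apply: funext => p /=; rewrite stereo_Rot.
  exact: within_L.
have u0 : u != 0 by apply/eqP => u0; move: hu; rewrite u0 sqmod0 => /eqP; rewrite eq_sym oner_eq0.
by move=> x y xin yin /= /(Rot_inj u0) e; apply: hi.
Qed.

Lemma pair_gc (F : S -> S) : (forall x, F (F x) = x) -> group_closed (fun f => f = id \/ f = F).
Proof.
move=> FF; split; first by left.
split.
  move=> f g [->|->] [->|->]; [left|right|right|left] => //.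
  by apply: funext => x /=.
move=> f g [->|->] gf fg.
  by left; apply: funext => x; have := congr1 (fun h => h x) gf.
right; apply: funext => x; rewrite -[in LHS](FF x).
by have := congr1 (fun h => h (F x)) gf.
Qed.

Lemma ex_root m : ex (2 * pi / (m.+2)%:R) ^+ m.+2 = 1 :> C.
Proof.
rewrite ex_pow (_ : (m.+2)%:R * (2 * pi / (m.+2)%:R) = pi *+ 2).
  by rewrite /ex cos2pi sin2pi.
by rewrite mulr2n; field.
Qed.

Lemma ex_ne1 m k : (0 < k < m.+2)%N -> ex (k%:R * (2 * pi / (m.+2)%:R)) != 1 :> C.
Proof.
move=> /andP[k0 km]; apply: ex_eq1.
have pi0 := pi_gt0 R.
have th0 : 0 < 2 * pi / (m.+2)%:R :> R by apply: divr_gt0 => //; rewrite mulr_gt0 // ltr0n.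
apply/andP; split; first by rewrite mulr_gt0 // ltr0n.
have -> : pi *+ 2 = (m.+2)%:R * (2 * pi / (m.+2)%:R) :> R.
  by rewrite mulr2n; field.
by rewrite ltr_pM2r // ltr_nat.
Qed.

Lemma ex_inj m a b : (a < m.+2)%N -> (b < m.+2)%N ->
  ex (2 * pi / (m.+2)%:R) ^+ a = ex (2 * pi / (m.+2)%:R) ^+ b :> C -> a = b.
Proof.
set w := ex _.
have w0 : w != 0 by apply/eqP => w0; have := sqmod_ex (2 * pi / (m.+2)%:R); rewrite -/w w0 sqmod0 => /eqP; rewrite eq_sym oner_eq0.
wlog ab : a b / (a <= b)%N.
  move=> H an bn e; case: (leqP a b) => [ab|ba]; first exact: H.
  by apply/esym/H => //; exact: ltnW.
move=> an bn e.
case: (ltngtP a b) => [lt|lt|//]; last by move: ab; rewrite leqNgt lt.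
exfalso.
have : w ^+ (b - a) = 1.
  apply: (mulfI (expf_neq0 a w0)); rewrite -exprD subnKC ?e ?mulr1 //; exact: ltnW.
rewrite ex_pow => /eqP; apply/negP; apply: ex_ne1; apply/andP; split; lia.
Qed.

End Glue.

Unset Implicit Arguments.

Theorem mainTheorem9 (R : realType) (n : nat) (T : sphere R -> sphere R)
  (h1 h2 : R * R -> sphere R) :
  (2 <= n)%N -> ~~ odd n ->
  let A : sphere R -> sphere R := rotm (2 * pi / n%:R) in
  let Ainv : sphere R -> sphere R := rotm (- (2 * pi / n%:R)) in
  let B : sphere R -> sphere R := invz in
  let Dn := gen [set A; B] in
  let K := gen [set A; B; T] in
  is_mobius T -> loxodromic T -> T \o B = (A \o B) \o T ->
  kleinian K ->
  disc_param h1 -> disc_param h2 ->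
  (forall h, Dn h -> h @` disc_of h1 `&` disc_of h2 = set0) ->
  precisely_invariant (disc_of h1) (gen [set B]) Dn ->
  precisely_invariant (disc_of h2) (gen [set A \o B]) Dn ->
  T @` disc_boundary h1 = disc_boundary h2 ->
  T @` (~` disc_of h1) = disc_interior h2 ->
  let Gamma := gen (fun f => exists j : 'I_n, f = iter j A \o T \o iter j Ainv) in
  schottky Gamma n /\ has_index K Gamma (2 * n) /\ ~ normal_in K Gamma.
Proof.
move=> n2 _.
have [m em] : exists m, n = m.+2 by exists n.-2; lia.
subst n.
move=> A Ainv B Dn K Tmob Tlox TB Kkl hp1 hp2 hdis pi1 pi2 hbd hint Gamma.
set th : R := 2 * pi / (m.+2)%:R.
set w : R[i] := ex th.
have wn : w ^+ m.+2 = 1 := @ex_root R m.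
have winj : forall a b, (a < m.+2)%N -> (b < m.+2)%N -> w ^+ a = w ^+ b -> a = b.
  exact: (@ex_inj R m).
have w0 : w != 0 by apply/eqP => w0; have := sqmod_ex th; rewrite -/w w0 sqmod0 => /eqP; rewrite eq_sym oner_eq0.
have eA : A = Rw w 1 by [].
have eAi : Ainv = Rw w m.+1.
  rewrite /Ainv /Rw -/(Rot (ex (- th))); congr Rot.
  apply: (mulIf w0); rewrite -exprSr wn /w exD addNr; exact: ex0.
have iterA j : iter j A = Rw w j by rewrite iter_Rot.
have iterAi j : iter j Ainv = Rw w (m.+1 * j) by rewrite eAi /Rw iter_Rot exprM.
have [a [b [c [d [det [eT ntr]]]]]] := Tlox.
pose Ti := mob d (-b) (-c) a.
have det0 : a * d - b * c != 0 by rewrite det oner_neq0.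
have TTi x : T (Ti x) = x by rewrite eT; have := congr1 (fun f => f x) (mob_inv det0).
have TiT x : Ti (T x) = x.
  have det1 : d * a - - b * - c != 0 by rewrite mulrNN [d * a]mulrC.
  have det2 : d * a - - b * - c = a * d - b * c by rewrite mulrNN [d * a]mulrC.
  by rewrite eT; have := congr1 (fun f => f x) (mob_inv det1); rewrite !opprK.
have TBp x : T (invz x) = Rw w 1 (invz (T x)) by have := congr1 (fun f => f x) TB.
have DnA : Dn A by apply: gen_in; rewrite /=; left.
have DnB : Dn B by apply: gen_in; rewrite /=; right.
have DnR k : Dn (Rw w k).
  by apply: (Ed_in (gen_group _) DnA DnB); exists k, false.
have KA : K A by apply: gen_in; rewrite /=; left; left.
have KB : K B by apply: gen_in; rewrite /=; left; right.
have KT : K T by apply: gen_in; rewrite /=; right.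
have KE d0 : Ed w d0 -> K d0 by apply: (Ed_in (gen_group _) KA KB).
set D1 := disc_of h1; set D2 := disc_of h2.
have PI1 k : Rw w k <> id -> Rw w k @` D1 `&` D1 = set0.
  move=> hk; apply: pi1.2; first exact: DnR.
  move=> Gk.
  have [e|e] := gen_sub (Y := fun f => f = id \/ f = invz) (fun f fB => or_intror fB) (pair_gc (@invzKx R)) Gk.
    exact: hk e.
  by have := congr1 (fun f => f None) e; rewrite Rw_fixN invzN.
have FF x : (A \o B) ((A \o B) x) = x.
  by rewrite /= eA /B (invz_Rw wn) invzKx (RwK1 wn).
have PI2 k : Rw w k <> id -> Rw w k @` D2 `&` D2 = set0.
  move=> hk; apply: pi2.2; first exact: DnR.
  move=> Gk.
  have [e|e] := gen_sub (Y := fun f => f = id \/ f = A \o B) (fun f fB => or_intror fB) (pair_gc FF) Gk.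
    exact: hk e.
  by have := congr1 (fun f => f None) e; rewrite /= Rw_fixN eA /B invzN Rw_fix0.
have Dis k : Rw w k @` D1 `&` D2 = set0 by apply: hdis; exact: DnR.
have Tmap y : ~ D1 y -> D2 (T y).
  move=> ny; have : (T @` (~` D1)) (T y) by exists y.
  rewrite hint => -[p pin <-]; exists p => //.
  by rewrite /cdisk /=; apply: ltW.
have KQ : K `<=` Qq m w T Ti.
  apply: gen_sub; last exact: Qq_group.
  move=> f /= [[->|->]|->].
  - by apply: (Qq_Ed wn T Ti); exists 1%N, false.
  - by apply: (Qq_Ed wn T Ti); exists 0%N, true; apply: funext => x /=; rewrite Rw0.
  - exact: (Qq_T wn TTi TiT TBp).
have eg (j : nat) : iter j A \o T \o iter j Ainv = ev m w T Ti (j, true).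
  by rewrite iterA iterAi.
have eG : Gamma = Gam m w T Ti.
  rewrite /Gamma /Gam; congr gen; apply: funext => f; apply: propext.
  by split => -[j ->]; exists j; rewrite eg.
have KR k : K (Rw w k) by apply: KE; exists k, false.
have GK : Gamma `<=` K.
  rewrite eG; apply: gen_sub; last exact: gen_group.
  move=> f [j ->]; have [_ [Kc _]] := gen_group [set A; B; T].
  by rewrite /ev /=; apply: (Kc); [apply: (Kc); [exact: KR | exact: KT] | exact: KR].
split; last first.
  split; first by rewrite eG; exact: (index_main wn winj TTi TiT PI1 PI2 Dis Tmap KQ KE).
  by rewrite eG; exact: (not_normal wn winj TTi TiT TBp PI1 PI2 Dis Tmap KB).
split.
  split; first by move=> g /GK; exact: Kkl.1.
  have [eps [eps0 H]] := Kkl.2.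
  by exists eps; split => // g a' b' c' d' Gg; apply: H; exact: GK.
exists (fun i : 'I_m.+2 => iter i A \o T \o iter i Ainv), (fun i => iter i A \o h1), (fun i => iter i A \o h2).
split; first by [].
have hD1 (i : nat) : disc_of (iter i A \o h1) = Disc w D1 D2 ((i : nat), false).
  by rewrite /disc_of iterA -image_comp.
have hD2 (i : nat) : disc_of (iter i A \o h2) = Disc w D1 D2 ((i : nat), true).
  by rewrite /disc_of iterA -image_comp.
have sqw (i : nat) : sqmod (w ^+ i) = 1 by rewrite /w ex_pow sqmod_ex.
split.
  move=> i /=; rewrite eg /ev /= eT /Rw (Rot_mob (u := w ^+ i) (v := w ^+ (m.+1 * i))); last first.
    by rewrite -exprD (_ : (i + m.+1 * i = i * m.+2 + 0)%N) ?(wmod wn) //; lia.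
  exists a, (b * w ^+ i), (c * w ^+ (m.+1 * i)), d; split; last by split.
  rewrite -det; congr (_ - _).
  rewrite mulrACA -exprD (_ : (i + m.+1 * i = i * m.+2 + 0)%N) ?(wmod wn) ?mulr1 //; lia.
split; first by move=> i; rewrite iterA; split; apply: disc_param_Rot.
split.
  move=> i j ij; rewrite !hD1 -subset0 => x [X1 X2].
  have := @disc_disj R m w wn winj D1 D2 PI1 PI2 Dis (_, false) (_, false) x (ltn_ord i) (ltn_ord j) X1 X2 => -[] /val_inj e.
  by move: ij; rewrite e eqxx.
split.
  move=> i j ij; rewrite !hD2 -subset0 => x [X1 X2].
  have := @disc_disj R m w wn winj D1 D2 PI1 PI2 Dis (_, true) (_, true) x (ltn_ord i) (ltn_ord j) X1 X2 => -[] /val_inj e.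
  by move: ij; rewrite e eqxx.
split.
  move=> i j; rewrite hD1 hD2 -subset0 => x [X1 X2].
  by have := @disc_disj R m w wn winj D1 D2 PI1 PI2 Dis (_, false) (_, true) x (ltn_ord i) (ltn_ord j) X1 X2.
move=> D; split.
  move=> i; rewrite /disc_boundary in hbd *; rewrite iterA iterAi image_comp.
  rewrite (eq_imagel (f' := Rw w i \o (T \o h1))); last by move=> p _ /=; rewrite (RwK2 wn).
  by rewrite -image_comp -image_comp hbd image_comp.
move=> i; rewrite -subset0 => y [[x Dx <-] Dy].
have hx : forall l, (l.1 < m.+2)%N -> ~ Disc w D1 D2 l x.
  move=> [j bb] /= jn Dl; apply: Dx; exists (Ordinal jn) => //=.
  by case: bb Dl => Dl; [right; rewrite hD2 | left; rewrite hD1].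
have := ev_disc wn TTi Tmap (l := ((i : nat), true)) (x := x) (hx ((i : nat), false) (ltn_ord i)).
rewrite -eg => Dl; apply: Dy; exists i => //=; right.
by rewrite hD2.
Qed.
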